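(* Let $F$ be a field of characteristic $0$, $d,n\ge1$, and let $G(x_1,\dots,x_{d^2})\in F\langle X\rangle^{\otimes n}$ be a tensor polynomial in the $d^2$ variables $x_1,\dots,x_{d^2}$ which is multilinear and alternating as a function on $M_d(F)^{d^2}$ with values in $M_d(F)^{\otimes n}$. Then there is an element $J_G\in M_d(F)^{\otimes n}$, invariant under the diagonal conjugation action of $GL(d)$ and lying in the linear span $\Sigma_n(F^d)$ of the permutation operators of the tensor factors in $M_d(F)^{\otimes n}=\mathrm{End}((F^d)^{\otimes n})$, such that for all $x_1,\dots,x_{d^2}\in M_d(F)$ $$G(x_1,\dots,x_{d^2})=\det(x_1,\dots,x_{d^2})\,J_G.$$
   Context: $F\langle X\rangle$ is the free associative algebra in $x_1,x_2,\dots$; an element of $F\langle X\rangle^{\otimes n}$ is evaluated on matrices via the algebra homomorphism $F\langle X\rangle^{\otimes n}\to M_d(F)^{\otimes n}$ induced by $x_i\mapsto x_i\in M_d(F)$. For $x_1,\dots,x_{d^2}\in M_d(F)$, $\det(x_1,\dots,x_{d^2})$ is the determinant of the $d^2\times d^2$ matrix whose $i$-th column is the coordinate vector of $x_i$ in the basis of elementary matrices $e_{i,j}$ ordered lexicographically. $S_n$ acts on $(F^d)^{\otimes n}$ by permuting tensor factors, and $GL(d)$ acts diagonally, $g(y_1\otimes\cdots\otimes y_n)=gy_1\otimes\cdots\otimes gy_n$. *)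

(* Defs.v *)
From HB Require Import structures.
From mathcomp Require Import all_boot all_order all_fingroup all_algebra.
Set Implicit Arguments. Unset Strict Implicit. Unset Printing Implicit Defensive.
Import GRing.Theory.
Local Open Scope ring_scope.

(* Multi-indices of the basis of (F^d)^{\otimes n}: i = (i_1,...,i_n). *)
Notation tidx d n := ({ffun 'I_n -> 'I_d}).

(* M_d(F)^{\otimes n} = End((F^d)^{\otimes n}): square matrices whose rows and
   columns are indexed (via enum_val) by the multi-indices tidx d n. *)
Notation tdim d n := #|{: tidx d n}|.
Notation tens F d n := ('M[F]_(tdim d n)).

Definition kron (F : fieldType) (d n : nat) (A : 'I_n -> 'M[F]_d) : tens F d n :=
  \matrix_(i, j) \prod_(k < n) A k ((enum_val i : tidx d n) k) ((enum_val j : tidx d n) k).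

(* Permutation operator: y_1 (x) ... (x) y_n |-> y_{s^-1 1} (x) ... (x) y_{s^-1 n}. *)
Definition perm_op (F : fieldType) (d n : nat) (s : 'S_n) : tens F d n :=
  \matrix_(i, j) if (enum_val i : tidx d n) == [ffun k => (enum_val j : tidx d n) ((s^-1)%g k)]
                 then 1 else 0.

(* Element of F<X>^{\otimes n} in the variables x_1..x_m (given as indices
   'I_m): a finite linear combination of tensors w_1 (x) ... (x) w_n of words. *)
Definition tpoly (F : fieldType) (m n : nat) := seq (F * {ffun 'I_n -> seq 'I_m}).

Definition eval_word (F : fieldType) (d m : nat) (x : 'I_m -> 'M[F]_d) (w : seq 'I_m)
  : 'M[F]_d := foldr (fun v M => x v *m M) 1%:M w.

Definition eval_tpoly (F : fieldType) (d m n : nat) (G : tpoly F m n)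
  (x : 'I_m -> 'M[F]_d) : tens F d n :=
  \sum_(t <- G) t.1 *: kron (fun k => eval_word x (t.2 k)).

Definition upd (T : Type) (m : nat) (x : 'I_m -> T) (i : 'I_m) (y : T) : 'I_m -> T :=
  fun j => if j == i then y else x j.

Definition multilinear_fun (F : fieldType) (d m : nat) (V : lmodType F)
  (f : ('I_m -> 'M[F]_d) -> V) : Prop :=
  forall (x : 'I_m -> 'M[F]_d) (i : 'I_m) (a : F) (y z : 'M[F]_d),
    f (upd x i (a *: y + z)) = a *: f (upd x i y) + f (upd x i z).

Definition alternating_fun (F : fieldType) (d m : nat) (V : lmodType F)
  (f : ('I_m -> 'M[F]_d) -> V) : Prop :=
  forall (x : 'I_m -> 'M[F]_d) (i j : 'I_m), i != j -> x i = x j -> f x = 0.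

(* det(x_1,...,x_{d^2}): columns are coordinate vectors of x_c in the basis
   e_{a,b} ordered lexicographically (mxvec uses lexicographic order on (a,b)). *)
Definition detx (F : fieldType) (d : nat) (x : 'I_(d * d) -> 'M[F]_d) : F :=
  \det (\matrix_(r < d * d, c < d * d) mxvec (x c) 0 r).

Definition GL_invariant (F : fieldType) (d n : nat) (J : tens F d n) : Prop :=
  forall g : 'M[F]_d, g \in unitmx ->
    kron (fun _ => g) *m J *m kron (fun _ => invmx g) = J.

Definition in_perm_span (F : fieldType) (d n : nat) (J : tens F d n) : Prop :=
  exists c : 'S_n -> F, J = \sum_(s : 'S_n) c s *: perm_op F d s.

(* Main.v *)
Require Import Defs.
From HB Require Import structures.
From mathcomp Require Import all_boot all_order all_fingroup all_algebra.
From Stdlib Require Import FunctionalExtensionality.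
Set Implicit Arguments. Unset Strict Implicit. Unset Printing Implicit Defensive.
Import GRing.Theory.
Local Open Scope ring_scope.


Lemma sum_tidx (R : nmodType) d n (H : tidx d n -> R) :
  \sum_(l < tdim d n) H (enum_val l) = \sum_(f : tidx d n) H f.
Proof.
rewrite (reindex (@enum_rank _)); last by exists enum_val => x _; rewrite ?enum_rankK ?enum_valK.
by apply: eq_bigr => f _; rewrite enum_rankK.
Qed.

Lemma prod_bool (R : comNzRingType) (I : finType) (b : I -> bool) :
  \prod_(i : I) (b i)%:R = ([forall i, b i])%:R :> R.
Proof.
case: (boolP [forall i, b i]) => [/forallP H|/forallPn [i Hi]].
  by rewrite big1 // => i _; rewrite H.
rewrite (bigD1 i) //=. by rewrite (negbTE Hi) mul0r.
Qed.

Lemma kron_mul (F : fieldType) d n (A B : 'I_n -> 'M[F]_d) :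
  kron A *m kron B = kron (fun k => A k *m B k).
Proof.
apply/matrixP => i j; rewrite !mxE.
rewrite (eq_bigr (fun l => \prod_k (A k ((enum_val i : tidx d n) k) ((enum_val l : tidx d n) k)
     * B k ((enum_val l : tidx d n) k) ((enum_val j : tidx d n) k)))); last first.
  by move=> l _; rewrite !mxE big_split.
rewrite (sum_tidx (fun f : tidx d n => \prod_k (A k ((enum_val i : tidx d n) k) (f k)
     * B k (f k) ((enum_val j : tidx d n) k)))).
rewrite -(bigA_distr_bigA (fun k (a : 'I_d) => A k ((enum_val i : tidx d n) k) a
     * B k a ((enum_val j : tidx d n) k))); apply: eq_bigr => k _; rewrite mxE; done.
Qed.

Lemma kron1 (F : fieldType) d n : kron (fun _ : 'I_n => 1%:M : 'M[F]_d) = 1%:M.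
Proof.
apply/matrixP => i j; rewrite !mxE.
rewrite (eq_bigr (fun k => ((enum_val i : tidx d n) k == (enum_val j : tidx d n) k)%:R)); last first.
  by move=> k _; rewrite mxE.
rewrite prod_bool; case: (i =P j) => [->|ne].
  by rewrite (_ : [forall _, _] = true) //; apply/forallP => k.
rewrite (_ : [forall _, _] = false) //; apply/negbTE/negP => /forallP H.
by apply: ne; apply: enum_val_inj; apply/ffunP => k; exact/eqP/H.
Qed.


Definition mlin (F : fieldType) (M V : lmodType F) m (f : ('I_m -> M) -> V) :=
  forall (x : 'I_m -> M) (i : 'I_m) (a : F) (y z : M),
    f (upd x i (a *: y + z)) = a *: f (upd x i y) + f (upd x i z).

Lemma ml_add (F : fieldType) (M V : lmodType F) m (f : ('I_m -> M) -> V) :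
  mlin f -> forall x i y z, f (upd x i (y + z)) = f (upd x i y) + f (upd x i z).
Proof. by move=> fl x i y z; have := fl x i 1 y z; rewrite !scale1r. Qed.

Lemma ml_0 (F : fieldType) (M V : lmodType F) m (f : ('I_m -> M) -> V) :
  mlin f -> forall x i, f (upd x i 0) = 0.
Proof.
move=> fl x i; have := ml_add fl x i 0 0; rewrite addr0 => /eqP.
by rewrite -subr_eq0 opprD addrA subrr sub0r oppr_eq0 => /eqP.
Qed.

Lemma ml_sum (F : fieldType) (M V : lmodType F) m (f : ('I_m -> M) -> V) (J : Type)
  (s : seq J) (a : J -> F) (v : J -> M) :
  mlin f -> forall x i, f (upd x i (\sum_(j <- s) a j *: v j)) =
     \sum_(j <- s) a j *: f (upd x i (v j)).
Proof.
move=> fl x i; elim: s => [|j s IH]; first by rewrite !big_nil ml_0.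
by rewrite !big_cons fl IH.
Qed.

Lemma ml_expand (F : fieldType) (M V : lmodType F) m (f : ('I_m -> M) -> V)
  (J : finType) (j0 : J) (a : 'I_m -> J -> F) (v : 'I_m -> J -> M) :
  mlin f ->
  f (fun c => \sum_j a c j *: v c j) =
  \sum_(h : {ffun 'I_m -> J}) (\prod_c a c (h c)) *: f (fun c => v c (h c)).
Proof.
move=> fl.
pose S c := \sum_j a c j *: v c j.
pose Pf (r : seq 'I_m) := pfamily j0 r (fun _ => predT).
suff H: forall r : seq 'I_m, uniq r -> forall x,
    f (fun c => if c \in r then S c else x c) =
    \sum_(h in Pf r) (\prod_(c <- r) a c (h c)) *:
        f (fun c => if c \in r then v c (h c) else x c).
  have := H (index_enum 'I_m) (index_enum_uniq _) (fun _ => 0).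
  have E1: (fun c => if c \in index_enum 'I_m then S c else 0) = S.
    by apply: functional_extensionality => c; rewrite mem_index_enum.
  rewrite E1 => ->; apply: eq_big => [h|h _].
    by apply/familyP => k; rewrite mem_index_enum.
  congr (_ *: f _); apply: functional_extensionality => c.
  by rewrite mem_index_enum.
elim=> [_ x|i r IHr] /=.
  rewrite (big_pred1 [ffun=> j0]); last first.
    move=> h; apply/familyP/eqP=> /= [Df |->{h} k]; last by rewrite ffunE !inE.
    by apply/ffunP=> k; rewrite ffunE; apply/eqP/Df.
  by rewrite big_nil scale1r.
case/andP=> nri ur x.
set Y := fun h : {ffun 'I_m -> J} => fun c => if c \in r then v c (h c) else x c.
transitivity (f (fun c => if c \in r then S c else upd x i (S i) c)).
  congr f; apply: functional_extensionality => c; rewrite inE /upd.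
  by case: (c =P i) => [->|_] /=; rewrite ?(negbTE nri).
rewrite IHr //.
transitivity (\sum_(h in Pf r) \sum_j (\prod_(c <- r) a c (h c) * a i j) *:
                 f (upd (Y h) i (v i j))).
  apply: eq_bigr => h _.
  have ->: (fun c => if c \in r then v c (h c) else upd x i (S i) c) = upd (Y h) i (S i).
    apply: functional_extensionality => c; rewrite /upd /Y.
    by case: (c =P i) => [->|_] /=; rewrite ?(negbTE nri).
  rewrite ml_sum // scaler_sumr; apply: eq_bigr => j _; by rewrite scalerA.
rewrite exchange_big /=; symmetry.
rewrite (partition_big (fun h : {ffun 'I_m -> J} => h i) predT) //=.
pose seti j (h : {ffun 'I_m -> J}) := [ffun k => if k == i then j else h k].
apply: eq_bigr => j _.
rewrite (reindex_onto (seti j) (seti j0)) => [|h /andP[_ /eqP hi]]; last first.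
  by apply/ffunP=> k; rewrite !ffunE; case: eqP => // ->.
apply: eq_big => [h | h eq_h]; last first.
  rewrite big_cons ffunE eqxx mulrC; congr (_ *: _).
    congr (_ * _); rewrite !big_seq; apply: eq_bigr => k kr.
    by rewrite ffunE; case: eqP kr nri => // -> ->.
  congr f; apply: functional_extensionality => c; rewrite /upd /Y inE ffunE.
  by case: (c =P i) => [->|_] /=.
rewrite !ffunE !eqxx andbT; apply/andP/idP => [[Pjf hij0] | Ph].
  apply/familyP => k.
  have /familyP /(_ k) := Pjf; rewrite !ffunE !inE.
  have := congr1 (fun g : {ffun 'I_m -> J} => g k) (eqP hij0); rewrite !ffunE.
  case: (k =P i) => [->|_] /=; last by move=> _. by move=> hi _; rewrite -hi (negbTE nri) !inE.
split.
  apply/familyP => k; rewrite !ffunE !inE.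
  have /familyP /(_ k) := Ph.
  by case: (k =P i) => [->|_] //= _; rewrite !inE.
apply/eqP/ffunP => k; rewrite !ffunE.
case: eqP => [->|_] //.
by have /familyP /(_ i) := Ph; rewrite (negbTE nri) /= inE => /eqP.
Qed.

Definition malt (F : fieldType) (M V : lmodType F) m (f : ('I_m -> M) -> V) :=
  forall (x : 'I_m -> M) (i j : 'I_m), i != j -> x i = x j -> f x = 0.

Lemma ml_swap (F : fieldType) (M V : lmodType F) m (f : ('I_m -> M) -> V) :
  mlin f -> malt f -> forall x (i j : 'I_m), i != j ->
  f (fun c => x (tperm i j c)) = - f x.
Proof.
move=> fl fa x i j nij.
pose s := x i + x j.
have nji : j != i by rewrite eq_sym.
have z0 : f (upd (upd x j s) i s) = 0.
  by apply: (fa _ i j nij); rewrite /upd !eqxx (negbTE nji).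
have E1 : upd (upd x j s) i (x i) = upd x j s.
  apply: functional_extensionality => c; rewrite /upd.
  by case: (c =P i) => [->|//]; rewrite (negbTE nij).
have E2 : upd (upd x j s) i (x j) = upd (upd x i (x j)) j s.
  apply: functional_extensionality => c; rewrite /upd.
  case: (c =P i) => [->|/eqP nci]; first by rewrite (negbTE nij).
  by case: (c =P j).
have E3 : f (upd x j (x i)) = 0.
  by apply: (fa _ i j nij); rewrite /upd eqxx (negbTE nij).
have E4 : upd x j (x j) = x.
  by apply: functional_extensionality => c; rewrite /upd; case: (c =P j) => [->|].
have E5 : upd (upd x i (x j)) j (x i) = (fun c => x (tperm i j c)).
  apply: functional_extensionality => c; rewrite /upd.
  case: (c =P j) => [->|/eqP ncj]; first by rewrite tpermR.
  case: (c =P i) => [->|/eqP nci]; first by rewrite tpermL.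
  by rewrite tpermD // eq_sym.
have E6 : f (upd (upd x i (x j)) j (x j)) = 0.
  by apply: (fa _ i j nij); rewrite /upd !eqxx (negbTE nij).
move: z0; rewrite /s (ml_add fl) E1 E2 !(ml_add fl) E3 E4 E5 E6 add0r addr0.
by move=> H; apply/eqP; rewrite -addr_eq0 addrC H.
Qed.

Lemma ml_perm (F : fieldType) (M V : lmodType F) m (f : ('I_m -> M) -> V) :
  mlin f -> malt f -> forall x (s : 'S_m),
  f (fun c => x (s c)) = (-1) ^+ s *: f x.
Proof.
move=> fl fa x s; have [ts -> dts] := prod_tpermP s.
elim: ts x dts => [|t ts IH] x /=.
  move=> _; rewrite big_nil odd_perm1 expr0 scale1r; congr f.
  by apply: functional_extensionality => c; rewrite perm1.
case/andP => dt dts; rewrite big_cons.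
have -> : (fun c => x ((tperm t.1 t.2 * \prod_(t0 <- ts) tperm t0.1 t0.2)%g c)) =
   (fun c => (fun c' => x ((\prod_(t0 <- ts) tperm t0.1 t0.2)%g c')) (tperm t.1 t.2 c)).
  by apply: functional_extensionality => c; rewrite permM.
rewrite (ml_swap fl fa (fun c' => x ((\prod_(t0 <- ts) tperm t0.1 t0.2)%g c')) dt) IH // odd_mul_tperm dt signr_addb expr1.
by rewrite -scalerA scaleN1r.
Qed.

Definition Ebasis (F : fieldType) d (c : 'I_(d * d)) : 'M[F]_d := vec_mx (delta_mx 0 c).

Lemma alt_det (F : fieldType) d (V : lmodType F) (f : ('I_(d * d) -> 'M[F]_d) -> V)
  (j0 : 'I_(d * d)) :
  mlin f -> malt f -> forall x, f x = detx x *: f (@Ebasis F d).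
Proof.
move=> fl fa x.
have xE : x = fun c => \sum_r (mxvec (x c) 0 r) *: Ebasis F r.
  apply: functional_extensionality => c.
  rewrite /Ebasis (eq_bigr (fun r => vec_mx (mxvec (x c) 0 r *: delta_mx 0 r))); last first.
    by move=> r _; rewrite linearZ.
  by rewrite -linear_sum /= -row_sum_delta mxvecK.
rewrite {1}xE (ml_expand j0 (fun c r => mxvec (x c) 0 r) (fun _ r => Ebasis F r) fl).
rewrite (bigID (fun h : {ffun _ -> _} => injectiveb h)) /= addrC big1 ?add0r; last first.
  move=> h /injectivePn [i1 [i2 Di12 Eh]].
  by rewrite (fa _ i1 i2 Di12) ?scaler0 // Eh.
rewrite (reindex (@pval _)) /=; last first.
  pose in_Sn := insubd (1%g : 'S_(d * d)).
  by exists in_Sn => /= h Uh; first apply: val_inj; apply: insubdK.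
rewrite /detx -det_tr scaler_suml.
apply: eq_big => /= [s | s _]; first by rewrite (valP s).
have -> : (fun c => Ebasis F (pval s c)) = (fun c => (fun c' => Ebasis F c') (s c)).
  by apply: functional_extensionality => c; rewrite pvalE.
rewrite (ml_perm fl fa) scalerA mulrC; congr (_ * _ *: _).
by apply: eq_bigr => i _; rewrite !mxE pvalE.
Qed.


Definition Phi (F : fieldType) d (phi : 'M[F]_d -> 'M[F]_d) : 'M[F]_(d * d) :=
  \matrix_(r, c) mxvec (phi (Ebasis F c)) 0 r.
Definition Xmat (F : fieldType) d (x : 'I_(d * d) -> 'M[F]_d) : 'M[F]_(d * d) :=
  \matrix_(r, c) mxvec (x c) 0 r.

Lemma vec_decomp (F : fieldType) d (y : 'M[F]_d) :
  y = \sum_c (mxvec y 0 c) *: Ebasis F c.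
Proof.
rewrite /Ebasis (eq_bigr (fun r => vec_mx (mxvec y 0 r *: delta_mx 0 r))); last first.
  by move=> r _; rewrite linearZ.
by rewrite -linear_sum /= -row_sum_delta mxvecK.
Qed.

Lemma Phi_apply (F : fieldType) d (phi : {linear 'M[F]_d -> 'M[F]_d}) y r :
  mxvec (phi y) 0 r = \sum_c Phi phi r c * mxvec y 0 c.
Proof.
rewrite {1}(vec_decomp y) !linear_sum summxE; apply: eq_bigr => c _.
by rewrite !linearZ mxE /= mxE mulrC.
Qed.

Lemma Xmat_lin (F : fieldType) d (phi : {linear 'M[F]_d -> 'M[F]_d}) x :
  Xmat (fun c => phi (x c)) = Phi phi *m Xmat x.
Proof.
apply/matrixP => r c; rewrite !mxE Phi_apply; by apply: eq_bigr => s _; rewrite ?mxE.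
Qed.

Lemma Phi_comp (F : fieldType) d (phi : {linear 'M[F]_d -> 'M[F]_d}) (psi : 'M[F]_d -> 'M[F]_d) :
  Phi (fun y => phi (psi y)) = Phi phi *m Phi psi.
Proof.
apply/matrixP => r c; rewrite !mxE Phi_apply; by apply: eq_bigr => s _; rewrite ?mxE.
Qed.

Lemma Phi_ext (F : fieldType) d (phi psi : 'M[F]_d -> 'M[F]_d) :
  phi =1 psi -> Phi phi = Phi psi.
Proof. by move=> e; apply/matrixP => r c; rewrite !mxE e. Qed.

Lemma Phi_id (F : fieldType) d : Phi (fun y : 'M[F]_d => y) = 1%:M.
Proof. by apply/matrixP => r c; rewrite !mxE /Ebasis vec_mxK !mxE eqxx eq_sym. Qed.

Lemma mul_mx_delta_E (F : fieldType) d (A : 'M[F]_d) (a b i j : 'I_d) :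
  (A *m delta_mx a b) i j = A i a * (b == j)%:R.
Proof.
rewrite mxE (bigD1 a) //= big1 ?addr0.
  by rewrite !mxE eqxx andTb eq_sym.
by move=> k nka; rewrite !mxE (negbTE nka) mulr0.
Qed.

Lemma Phi_tr (F : fieldType) d (h : 'M[F]_d) : Phi (mulmx h^T) = (Phi (mulmx h))^T.
Proof.
apply/matrixP => r c; rewrite !mxE.
case/mxvec_indexP: r => i j; case/mxvec_indexP: c => a b.
rewrite /Ebasis !vec_mx_delta !mxvecE !mul_mx_delta_E mxE.
by rewrite eq_sym.
Qed.

Lemma det_Phi_tr2 (F : fieldType) d :
  \det (Phi (@trmx F d d)) * \det (Phi (@trmx F d d)) = 1.
Proof.
rewrite -det_mulmx -(Phi_comp (@trmx F d d) (@trmx F d d)).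
by rewrite (@Phi_ext _ _ _ (fun y => y)) ?Phi_id ?det1 // => y /=; rewrite trmxK.
Qed.

Lemma det_Phi_mulmxr (F : fieldType) d (h : 'M[F]_d) :
  \det (Phi (mulmxr h)) = \det (Phi (mulmx h)).
Proof.
rewrite (@Phi_ext _ _ _ (fun y => trmx (mulmx h^T (trmx y)))); last first.
  by move=> y /=; rewrite trmx_mul !trmxK.
rewrite (Phi_comp (@trmx F d d)) (Phi_comp (mulmx h^T)) !det_mulmx Phi_tr det_tr.
by rewrite mulrCA det_Phi_tr2 mulr1.
Qed.

Lemma detx_conj (F : fieldType) d (g : 'M[F]_d) x : g \in unitmx ->
  detx (fun c => g *m x c *m invmx g) = detx x.
Proof.
move=> gu.
have -> : (fun c => g *m x c *m invmx g) = (fun c => mulmx g (mulmxr (invmx g) (x c))).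
  by apply: functional_extensionality => c /=; rewrite mulmxA.
rewrite /detx -/(Xmat _) Xmat_lin Xmat_lin !det_mulmx det_Phi_mulmxr mulrA -det_mulmx.
rewrite -(Phi_comp (mulmx g) (mulmx (invmx g))).
rewrite (@Phi_ext _ _ _ (fun y => y)) ?Phi_id ?det1 ?mul1r //.
by move=> y /=; rewrite mulKVmx.
Qed.


Lemma eq_kron (F : fieldType) d n (A B : 'I_n -> 'M[F]_d) :
  (forall k, A k = B k) -> kron A = kron B.
Proof. by move=> e; apply/matrixP => i j; rewrite !mxE; apply: eq_bigr => k _; rewrite e. Qed.

Lemma eval_word_conj (F : fieldType) d m (g : 'M[F]_d) (x : 'I_m -> 'M[F]_d) w :
  g \in unitmx ->
  eval_word (fun c => g *m x c *m invmx g) w = g *m eval_word x w *m invmx g.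
Proof.
move=> gu; elim: w => [|v w IH] /=; first by rewrite mulmx1 mulmxV.
by rewrite IH !mulmxA mulmxKV.
Qed.

Lemma eval_tpoly_conj (F : fieldType) d m n (G : tpoly F m n) (g : 'M[F]_d) x :
  g \in unitmx ->
  eval_tpoly G (fun c => g *m x c *m invmx g) =
  kron (fun _ => g) *m eval_tpoly G x *m kron (fun _ => invmx g).
Proof.
move=> gu; rewrite /eval_tpoly mulmx_sumr mulmx_suml; apply: eq_bigr => t _.
rewrite -scalemxAr -scalemxAl !kron_mul; congr (_ *: _); apply: eq_kron => k.
by rewrite eval_word_conj.
Qed.

Lemma natr_inj0 (F : fieldType) : [pchar F] =i pred0 -> injective (fun k : nat => k%:R : F).
Proof.
move=> /pcharf0P c0 m n /= e.
wlog le_mn : m n e / (m <= n)%N.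
  by move=> W; case: (leqP m n) => [h|/ltnW h]; [apply: W | symmetry; apply: W].
move: e; rewrite -(subnKC le_mn) natrD -{1}[m%:R]addr0 => /addrI /esym /eqP.
by rewrite c0 => /eqP ->; rewrite addn0.
Qed.

Lemma poly_inf_roots (F : fieldType) (p : {poly F}) : [pchar F] =i pred0 ->
  (forall k : nat, root p k%:R) -> p = 0.
Proof.
move=> c0 H; apply: (@roots_geq_poly_eq0 _ p [seq k%:R | k <- iota 0 (size p)]).
- by apply/allP => z /mapP [k _ ->]; apply: H.
- by rewrite map_inj_uniq ?iota_uniq //; apply: natr_inj0.
- by rewrite size_map size_iota.
Qed.

Lemma char_poly_horner (F : fieldType) d (B : 'M[F]_d) (a : F) :
  (char_poly B).[a] = \det (a%:M - B).
Proof.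
rewrite horner_sum; apply: eq_bigr => s _.
rewrite hornerM horner_exp !hornerE; congr (_ * _).
rewrite (big_morph _ (fun p q => hornerM p q a) (hornerC 1 a)).
by apply: eq_bigr => i _; rewrite !mxE !(hornerE, hornerMn).
Qed.

Lemma det_shift_root (F : fieldType) d (A : 'M[F]_d) (t : F) :
  ~~ root (char_poly (- A)) t -> (A + t%:M) \in unitmx.
Proof.
by rewrite /root char_poly_horner unitmxE unitfE opprK addrC.
Qed.

Lemma kron_density (F : fieldType) d n (J : tens F d n) : [pchar F] =i pred0 ->
  (forall g : 'M[F]_d, g \in unitmx -> kron (fun _ : 'I_n => g) *m J = J *m kron (fun _ => g)) ->
  forall A, kron (fun _ : 'I_n => A) *m J = J *m kron (fun _ => A).
Proof.
move=> c0 H A; apply/matrixP => i j.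
pose ev (l : 'I_(tdim d n)) := (enum_val l : tidx d n).
pose Pk (l l' : 'I_(tdim d n)) : {poly F} :=
  \prod_k ((A (ev l k) (ev l' k))%:P + ((ev l k == ev l' k)%:R)%:P * 'X).
have Pk_ev t l l' : (Pk l l').[t] = kron (fun _ => A + t%:M) l l'.
  rewrite horner_prod mxE; apply: eq_bigr => k _.
  by rewrite !hornerE !mxE mulr_natl.
pose Q := \sum_l (Pk i l * (J l j)%:P - (J i l)%:P * Pk l j).
have Qev t : Q.[t] = (kron (fun _ => A + t%:M) *m J - J *m kron (fun _ => A + t%:M)) i j.
  rewrite horner_sum !mxE -sumrB; apply: eq_bigr => l _.
  by rewrite hornerD hornerN !hornerM !hornerC !Pk_ev.
have Q0 : Q = 0.
  have: Q * char_poly (- A) = 0.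
    apply: poly_inf_roots c0 _ => k; rewrite /root hornerM.
    case: (boolP (root (char_poly (- A)) k%:R)) => [/eqP -> | nr]; first by rewrite mulr0.
    by rewrite Qev H ?det_shift_root // subrr mxE mul0r.
  move/eqP; rewrite mulf_eq0 (negbTE (monic_neq0 (char_poly_monic _))) orbF.
  by move/eqP.
have EA : A + 0%:M = A by apply/matrixP => a b; rewrite !mxE mul0rn addr0.
have := Qev 0; rewrite Q0 horner0 EA [in RHS]mxE => /esym /eqP.
by rewrite [X in _ + X]mxE subr_eq0 => /eqP.
Qed.


Lemma mul_perm_op_l (F : fieldType) d n (s : 'S_n) (M : tens F d n) i j :
  (perm_op F d s *m M) i j =
  M (enum_rank ([ffun k => (enum_val i : tidx d n) (s k)] : tidx d n)) j.
Proof.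
set f0 := [ffun k => (enum_val i : tidx d n) (s k)] : tidx d n.
rewrite mxE (bigD1 (enum_rank f0)) //= big1 ?addr0.
  rewrite !mxE enum_rankK (_ : _ == _ = true) ?mul1r //.
  by apply/eqP/ffunP => k; rewrite !ffunE permKV.
move=> l nl; rewrite !mxE; case: eqP => [e|_]; last by rewrite mul0r.
case/eqP: nl; apply: enum_val_inj; rewrite enum_rankK; apply/ffunP => k.
by rewrite /f0 ffunE e ffunE permK.
Qed.

Lemma mul_perm_op_r (F : fieldType) d n (t : 'S_n) (M : tens F d n) i j :
  (M *m perm_op F d t) i j =
  M i (enum_rank ([ffun k => (enum_val j : tidx d n) ((t^-1)%g k)] : tidx d n)).
Proof.
set f0 := [ffun k => (enum_val j : tidx d n) ((t^-1)%g k)] : tidx d n.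
rewrite mxE (bigD1 (enum_rank f0)) //= big1 ?addr0.
  by rewrite !mxE enum_rankK eqxx mulr1.
move=> l nl; rewrite !mxE; case: eqP => [e|_]; last by rewrite mulr0.
by case/eqP: nl; apply: enum_val_inj; rewrite enum_rankK e.
Qed.

Lemma perm_op_mul (F : fieldType) d n (s t : 'S_n) :
  perm_op F d s *m perm_op F d t = perm_op F d (t * s)%g.
Proof.
apply/matrixP => i j; rewrite mul_perm_op_l !mxE enum_rankK.
congr (if _ then _ else _); apply/eqP/eqP => e; apply/ffunP => k.
  have := congr1 (fun g : tidx d n => g ((s^-1)%g k)) e; rewrite !ffunE permKV => ->.
  by rewrite invMg permM.
by rewrite !ffunE e !ffunE invMg permM permK.
Qed.

Lemma perm_op1 (F : fieldType) d n : perm_op F d (1%g : 'S_n) = 1%:M.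
Proof.
apply/matrixP => i j; rewrite !mxE; case: (i =P j) => [->|ne].
  rewrite (_ : _ == _ = true) //; apply/eqP/ffunP => k; by rewrite ffunE invg1 perm1.
rewrite (_ : _ == _ = false) //; apply/negbTE/eqP => e; apply: ne.
apply: enum_val_inj; rewrite e; apply/ffunP => k; by rewrite ffunE invg1 perm1.
Qed.

Lemma perm_op_kron (F : fieldType) d n (s : 'S_n) (A : 'I_n -> 'M[F]_d) :
  perm_op F d s *m kron A *m perm_op F d (s^-1)%g = kron (fun k => A ((s^-1)%g k)).
Proof.
apply/matrixP => i j; rewrite mul_perm_op_r mul_perm_op_l !mxE !enum_rankK.
rewrite [RHS](reindex_perm s); apply: eq_bigr => k _; rewrite !ffunE invgK permK.
done.
Qed.

Lemma kron_sum (F : fieldType) d n (J : finType) (c : J -> F) (A : J -> 'M[F]_d) :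
  kron (fun _ : 'I_n => \sum_j c j *: A j) =
  \sum_(f : {ffun 'I_n -> J}) (\prod_k c (f k)) *: kron (fun k => A (f k)).
Proof.
apply/matrixP => a b; rewrite !mxE summxE.
rewrite (eq_bigr (fun k => \sum_j c j * A j ((enum_val a : tidx d n) k) ((enum_val b : tidx d n) k))); last first.
  by move=> k _; rewrite summxE; apply: eq_bigr => j _; rewrite mxE.
rewrite bigA_distr_bigA; apply: eq_bigr => f _; rewrite !mxE -big_split /=.
done.
Qed.

Lemma surj_inj n (f : {ffun 'I_n -> 'I_n}) : [forall i, i \in codom f] = injectiveb f.
Proof.
apply/idP/idP => [/forallP H | /injectiveP fi].
  have cc : #|codom f| = #|'I_n|.
    apply/eqP; rewrite eqn_leq max_card /=; apply: subset_leq_card.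
    by apply/subsetP => i _; exact: H i.
  by apply/card_uniqP; rewrite size_codom.
by apply/forallP => i; apply: inj_card_onto.
Qed.

Lemma incl_excl (F : fieldType) d n (A : 'I_n -> 'M[F]_d) :
  \sum_(s : 'S_n) kron (fun k => A (s k)) =
  \sum_(e : {ffun 'I_n -> bool}) (\prod_i (if e i then 1 else -1)) *:
        kron (fun _ : 'I_n => \sum_i (e i)%:R *: A i).
Proof.
rewrite (eq_bigr (fun e : {ffun 'I_n -> bool} => \sum_(f : {ffun 'I_n -> 'I_n})
   ((\prod_i (if e i then 1 else -1)) * \prod_k (e (f k))%:R) *: kron (fun k => A (f k))));
  last first.
  by move=> e _; rewrite kron_sum scaler_sumr; apply: eq_bigr => f _; rewrite scalerA.
rewrite exchange_big /=.
rewrite (eq_bigr (fun f : {ffun 'I_n -> 'I_n} => (injectiveb f)%:R *: kron (fun k => A (f k))));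
  last first.
  move=> f _; rewrite -scaler_suml; congr (_ *: _).
  rewrite (eq_bigr (fun e : {ffun 'I_n -> bool} => \prod_i ((if e i then 1 else -1) *
               ((i \in codom f) ==> e i)%:R))); last first.
    move=> e _; rewrite big_split /=; congr (_ * _); rewrite !prod_bool.
    rewrite (_ : [forall i, e (f i)] = [forall i, (i \in codom f) ==> e i]) //.
    apply/forallP/forallP => H i.
      by apply/implyP => /codomP [k ->]; exact: H k.
    by have /implyP := H (f i); apply; exact: codom_f.
  rewrite -(bigA_distr_bigA (fun i (b : bool) => (if b then 1 else -1) * ((i \in codom f) ==> b)%:R)).
  rewrite (eq_bigr (fun i => (i \in codom f)%:R)); last first.
    by move=> i _; rewrite big_bool /=; case: (i \in codom f); rewrite /= ?mulr1 ?mulr0 ?addr0 ?subrr.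
  by rewrite prod_bool surj_inj.
symmetry.
rewrite (bigID (fun f : {ffun _ -> _} => injectiveb f)) /= addrC big1 ?add0r; last first.
  by move=> f fn; rewrite (negbTE fn) scale0r.
rewrite (reindex (@pval _)) /=; last first.
  pose in_Sn := insubd (1%g : 'S_n).
  by exists in_Sn => /= h Uh; first apply: val_inj; apply: insubdK.
apply: eq_big => /= [s | s _]; first by rewrite (valP s).
rewrite (valP s) scale1r; apply: eq_kron => k; by rewrite pvalE.
Qed.

Lemma delta_kron (F : fieldType) d n (i j : 'I_(tdim d n)) :
  delta_mx i j = kron (fun k => delta_mx ((enum_val i : tidx d n) k) ((enum_val j : tidx d n) k)) :> tens F d n.
Proof.
apply/matrixP => a b; rewrite !mxE.
rewrite (eq_bigr (fun k => (((enum_val a : tidx d n) k == (enum_val i : tidx d n) k) &&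
     ((enum_val b : tidx d n) k == (enum_val j : tidx d n) k))%:R)); last first.
  by move=> k _; rewrite mxE.
rewrite prod_bool.
rewrite (_ : [forall k, _] = (a == i) && (b == j)) //.
apply/forallP/andP => [H|[/eqP -> /eqP ->] k]; last by rewrite !eqxx.
split; apply/eqP/enum_val_inj/ffunP => k; by have /andP[/eqP ? /eqP ?] := H k.
Qed.

Lemma comm_sum (F : fieldType) N (J : 'M[F]_N) (I : finType) (Fm : I -> 'M[F]_N) :
  (forall i, Fm i *m J = J *m Fm i) -> (\sum_i Fm i) *m J = J *m \sum_i Fm i.
Proof. by move=> H; rewrite mulmx_suml mulmx_sumr; apply: eq_bigr => i _; rewrite H. Qed.

Lemma comm_scale (F : fieldType) N (J Y : 'M[F]_N) a :
  Y *m J = J *m Y -> (a *: Y) *m J = J *m (a *: Y).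
Proof. by move=> H; rewrite -scalemxAl H scalemxAr. Qed.

Lemma sym_commute (F : fieldType) d n (J : tens F d n) :
  (forall A, kron (fun _ : 'I_n => A) *m J = J *m kron (fun _ => A)) ->
  forall X : tens F d n,
  (\sum_(s : 'S_n) perm_op F d s *m X *m perm_op F d (s^-1)%g) *m J =
  J *m (\sum_(s : 'S_n) perm_op F d s *m X *m perm_op F d (s^-1)%g).
Proof.
move=> HJ X.
have -> : \sum_(s : 'S_n) perm_op F d s *m X *m perm_op F d (s^-1)%g =
   \sum_i \sum_j X i j *: \sum_(s : 'S_n) perm_op F d s *m delta_mx i j *m perm_op F d (s^-1)%g.
  transitivity (\sum_(s : 'S_n) \sum_i \sum_j X i j *:
        (perm_op F d s *m delta_mx i j *m perm_op F d (s^-1)%g)).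
    apply: eq_bigr => s _; rewrite {1}(matrix_sum_delta X) mulmx_sumr mulmx_suml.
    apply: eq_bigr => i _; rewrite mulmx_sumr mulmx_suml.
    by apply: eq_bigr => j _; rewrite -scalemxAr -scalemxAl.
  rewrite exchange_big; apply: eq_bigr => i _; rewrite exchange_big.
  by apply: eq_bigr => j _; rewrite scaler_sumr.
apply: comm_sum => i; apply: comm_sum => j; apply: comm_scale.
rewrite (eq_bigr (fun s : 'S_n => kron (fun k => delta_mx ((enum_val i : tidx d n) ((s^-1)%g k))
                                    ((enum_val j : tidx d n) ((s^-1)%g k))))); last first.
  by move=> s _; rewrite delta_kron perm_op_kron.
rewrite (reindex_inj invg_inj) /=.
rewrite (eq_bigr (fun s : 'S_n => kron (fun k => (fun k' => delta_mx ((enum_val i : tidx d n) k')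
                                    ((enum_val j : tidx d n) k')) (s k)))); last first.
  by move=> s _; apply: eq_kron => k; rewrite invgK.
rewrite (incl_excl (fun k' => delta_mx ((enum_val i : tidx d n) k') ((enum_val j : tidx d n) k'))).
apply: comm_sum => e; apply: comm_scale; exact: HJ.
Qed.


Lemma span0 (F : fieldType) d n : in_perm_span (0 : tens F d n).
Proof. by exists (fun _ => 0); rewrite big1 // => s _; rewrite scale0r. Qed.

Lemma spanD (F : fieldType) d n (Y Z : tens F d n) :
  in_perm_span Y -> in_perm_span Z -> in_perm_span (Y + Z).
Proof.
move=> [c ->] [c' ->]; exists (fun s => c s + c' s).
by rewrite -big_split; apply: eq_bigr => s _; rewrite scalerDl.
Qed.

Lemma spanZ (F : fieldType) d n a (Y : tens F d n) :
  in_perm_span Y -> in_perm_span (a *: Y).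
Proof.
move=> [c ->]; exists (fun s => a * c s).
by rewrite scaler_sumr; apply: eq_bigr => s _; rewrite scalerA.
Qed.

Lemma span_sum (F : fieldType) d n (I : finType) (Fm : I -> tens F d n) :
  (forall i, in_perm_span (Fm i)) -> in_perm_span (\sum_i Fm i).
Proof.
move=> H; apply: (big_ind (@in_perm_span F d n)); [exact: span0 | exact: spanD | by []].
Qed.

Lemma span_perm (F : fieldType) d n (t : 'S_n) : in_perm_span (perm_op F d t).
Proof.
exists (fun s => (s == t)%:R); rewrite (bigD1 t) //= eqxx scale1r big1 ?addr0 //.
by move=> s /negbTE ->; rewrite scale0r.
Qed.

Lemma span_lmul (F : fieldType) d n (s : 'S_n) (Y : tens F d n) :
  in_perm_span Y -> in_perm_span (perm_op F d s *m Y).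
Proof.
move=> [c ->]; rewrite mulmx_sumr; apply: span_sum => t.
by rewrite -scalemxAr perm_op_mul; apply: spanZ; apply: span_perm.
Qed.

Lemma proj_exists (F : fieldType) d n :
  exists pr : 'M[F]_(tdim d n * tdim d n),
    (forall Y : tens F d n, in_perm_span (vec_mx (mxvec Y *m pr) : tens F d n)) /\
    (forall s : 'S_n, vec_mx (mxvec (perm_op F d s) *m pr) = perm_op F d s).
Proof.
pose Bm : 'M[F]_(#|{: 'S_n}|, tdim d n * tdim d n) :=
  \matrix_(k, c) mxvec (perm_op F d (enum_val k)) 0 c.
pose U := (<<Bm>>)%MS.
exists (proj_mx U (U^C)%MS); split.
  move=> Y; have := proj_mx_sub U (U^C)%MS (mxvec Y); rewrite /U genmxE => /submxP [D ->].
  rewrite mulmx_sum_row linear_sum /=; apply: span_sum => k.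
  rewrite linearZ /=; apply: spanZ.
  have -> : row k Bm = mxvec (perm_op F d (enum_val k)).
    by apply/rowP => c; rewrite !mxE.
  by rewrite mxvecK; apply: span_perm.
move=> s; rewrite proj_mx_id ?mxvecK //; first exact: capmx_compl.
rewrite /U genmxE.
have -> : mxvec (perm_op F d s) = row (enum_rank s) Bm.
  by apply/rowP => c; rewrite !mxE enum_rankK.
exact: row_sub.
Qed.

Lemma mul_delta_mx_E (F : fieldType) N (A : 'M[F]_N) (a b i j : 'I_N) :
  (delta_mx a b *m A) i j = (i == a)%:R * A b j.
Proof.
rewrite mxE (bigD1 b) //= big1 ?addr0.
  by rewrite !mxE eqxx andbT.
by move=> k nkb; rewrite !mxE (negbTE nkb) andbF mul0r.
Qed.

Lemma delta_sandwich (F : fieldType) N (Y : 'M[F]_N) (a b c e : 'I_N) :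
  delta_mx a b *m Y *m delta_mx c e = Y b c *: delta_mx a e.
Proof.
apply/matrixP => x z; rewrite mul_mx_delta_E mul_delta_mx_E !mxE.
by rewrite (eq_sym e z); case: (x == a); case: (z == e); rewrite /= ?mul1r ?mul0r ?mulr1 ?mulr0.
Qed.

Lemma lin_rep (F : fieldType) N (phi : {linear 'M[F]_N -> 'M[F]_N}) (Y : 'M[F]_N) :
  phi Y = \sum_b \sum_c \sum_a \sum_e phi (delta_mx b c) a e *: (delta_mx a b *m Y *m delta_mx c e).
Proof.
rewrite {1}(matrix_sum_delta Y) linear_sum; apply: eq_bigr => b _.
rewrite linear_sum; apply: eq_bigr => c _; rewrite linearZZ.
rewrite {1}(matrix_sum_delta (phi (delta_mx b c))) scaler_sumr; apply: eq_bigr => a _.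
rewrite scaler_sumr; apply: eq_bigr => e _.
by rewrite delta_sandwich !scalerA mulrC.
Qed.

Lemma commutant_span (F : fieldType) d n (J : tens F d n) : [pchar F] =i pred0 ->
  (forall X : tens F d n,
    (\sum_(s : 'S_n) perm_op F d s *m X *m perm_op F d (s^-1)%g) *m J =
    J *m (\sum_(s : 'S_n) perm_op F d s *m X *m perm_op F d (s^-1)%g)) ->
  in_perm_span J.
Proof.
move=> c0 HS; have [pr [prspan prid]] := proj_exists F d n.
pose pi : {linear tens F d n -> tens F d n} := (vec_mx \o mulmxr pr \o (@mxvec F (tdim d n) (tdim d n))).
pose Sx (X : tens F d n) := \sum_(s : 'S_n) perm_op F d s *m X *m perm_op F d (s^-1)%g.
pose pb (Y : tens F d n) := \sum_(s : 'S_n) perm_op F d s *m pi (perm_op F d (s^-1)%g *m Y).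
have pbE Y : pb Y = \sum_b \sum_c \sum_a \sum_e pi (delta_mx b c) a e *:
                       (Sx (delta_mx a b) *m Y *m delta_mx c e).
  transitivity (\sum_(s : 'S_n) \sum_b \sum_c \sum_a \sum_e pi (delta_mx b c) a e *:
       (perm_op F d s *m delta_mx a b *m perm_op F d (s^-1)%g *m Y *m delta_mx c e)).
    apply: eq_bigr => s _; rewrite (lin_rep pi) mulmx_sumr; apply: eq_bigr => b _.
    rewrite mulmx_sumr; apply: eq_bigr => c _; rewrite mulmx_sumr; apply: eq_bigr => a _.
    rewrite mulmx_sumr; apply: eq_bigr => e _.
    by rewrite -scalemxAr !mulmxA.
  rewrite exchange_big; apply: eq_bigr => b _; rewrite exchange_big; apply: eq_bigr => c _.
  rewrite exchange_big; apply: eq_bigr => a _; rewrite exchange_big; apply: eq_bigr => e _.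
  by rewrite -scaler_sumr -!mulmx_suml.
have pb1 : pb 1%:M = (#|{: 'S_n}|)%:R *: 1%:M.
  rewrite /pb (eq_bigr (fun _ => 1%:M)); last first.
    move=> s _; rewrite mulmx1 /pi /= prid perm_op_mul mulVg perm_op1 //.
  by rewrite sumr_const scaler_nat.
have pbJ : pb J = J *m pb 1%:M.
  rewrite !pbE mulmx_sumr; apply: eq_bigr => b _; rewrite mulmx_sumr; apply: eq_bigr => c _.
  rewrite mulmx_sumr; apply: eq_bigr => a _; rewrite mulmx_sumr; apply: eq_bigr => e _.
  by rewrite -scalemxAr mulmx1 HS !mulmxA.
have : in_perm_span (pb J).
  apply: span_sum => s; apply: span_lmul; exact: prspan.
rewrite pbJ pb1 -scalemxAr mulmx1 => H.
have k0 : (#|{: 'S_n}|%:R : F) != 0.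
  move/pcharf0P: c0 => ->; rewrite -lt0n; apply/card_gt0P; by exists 1%g.
by have := spanZ (#|{: 'S_n}|%:R^-1) H; rewrite scalerA mulVf // scale1r.
Qed.


Lemma detx_E (F : fieldType) d : detx (@Ebasis F d) = 1.
Proof. by rewrite /detx -[X in \det X]/(Phi (fun y => y)) Phi_id det1. Qed.

Theorem mainTheorem2 (F : fieldType) (d n : nat)
  (G : tpoly F (d * d) n) :
  [pchar F] =i pred0 ->
  (0 < d)%N -> (0 < n)%N ->
  multilinear_fun (fun x : 'I_(d * d) -> 'M[F]_d => eval_tpoly G x) ->
  alternating_fun (fun x : 'I_(d * d) -> 'M[F]_d => eval_tpoly G x) ->
  exists J : tens F d n,
    [/\ GL_invariant J, in_perm_span J &
        forall x : 'I_(d * d) -> 'M[F]_d, eval_tpoly G x = detx x *: J].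
Proof.
move=> c0 d0 n0 Hml Hal.
have dd0 : (0 < d * d)%N by rewrite muln_gt0 d0.
pose j0 : 'I_(d * d) := Ordinal dd0.
pose J := eval_tpoly G (@Ebasis F d).
have HG : forall x, eval_tpoly G x = detx x *: J.
  by move=> x; apply: (alt_det j0 (f := fun x => eval_tpoly G x)).
have Hinv : GL_invariant J.
  move=> g gu; rewrite -eval_tpoly_conj // HG detx_conj // detx_E scale1r //.
have comm : forall g : 'M[F]_d, g \in unitmx ->
    kron (fun _ : 'I_n => g) *m J = J *m kron (fun _ => g).
  move=> g gu.
  have E : kron (fun _ : 'I_n => invmx g) *m kron (fun _ => g) = 1%:M.
    rewrite kron_mul (@eq_kron _ _ _ _ (fun _ => 1%:M)) ?kron1 // => k.
    by rewrite mulVmx.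
  by rewrite -{2}(Hinv g gu) -[RHS]mulmxA E mulmx1.
have dens := kron_density c0 comm.
have span := commutant_span c0 (sym_commute dens).
by exists J; split.
Qed.
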